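(* Let $\tilde U(\mathbf v,d)=V(\mathbf v,d)\setminus\{[1,0,0],[0,1,0],[0,0,1]\}$. Then the closure of $\beta(\tilde U(\mathbf v,d))$ is contained in $HC_F(\mathbf v,d)$, and $\beta$ restricts to a rational map $\beta:V(\mathbf v,d)\dashrightarrow HC_F(\mathbf v,d)$.
   Context: On $\mathbb{C}P^4$ use homogeneous coordinates $[w_0,w_1,w_2,w_3,x_1]$; let $Y$ be the surface $w_0w_3-w_1w_2=0$, $x_1^2+w_0w_3=0$. For parameters $[\mathbf v,d]=[v_{11},v_{12},v_{21},v_{22},d]\in\mathbb{C}P^4$ (complex, not all zero) set $a_1=v_{11}-v_{21}-d$, $a_2=-v_{11}-v_{21}+d$, $a_3=v_{11}+v_{21}+d$, $a_4=-v_{11}+v_{21}-d$, and let $HC_F(\mathbf v,d)$ be the set of points of $Y$ satisfying $2\big(v_{22}(w_3-w_0)-v_{12}(w_2-w_1)\big)x_1+a_1w_0w_1+a_2w_0w_2+a_3w_1w_3+a_4w_2w_3=0$. On $\mathbb{C}P^2$ with coordinates $[u_0,u_1,u_2]$ let $V(\mathbf v,d)$ be the curve $P=0$ with $P=a_4u_2^4+2(v_{22}u_0-v_{12}u_1)u_2^3-(a_3u_0^2+a_2u_1^2)u_2^2+2u_0u_1(v_{22}u_1-v_{12}u_0)u_2+a_1u_0^2u_1^2$. Define the rational map $\beta:\mathbb{C}P^2\dashrightarrow Y$, $\beta([u_0,u_1,u_2])=[-u_0u_1^2,-u_0^2u_1,u_1u_2^2,u_0u_2^2,u_0u_1u_2]$,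 which is defined away from $[1,0,0],[0,1,0],[0,0,1]$. *)

(* Defs.v *)
From mathcomp Require Import all_boot all_order all_algebra.
From mathcomp Require Import mpoly.
Set Implicit Arguments. Unset Strict Implicit. Unset Printing Implicit Defensive.
Import GRing.Theory Num.Theory.
Local Open Scope ring_scope.

Section Defs.
Variable C : numClosedFieldType.

(* A point of CP^n is represented by a nonzero coordinate vector 'I_n.+1 -> C;
   all the sets below are defined by homogeneous equations, so they are cones. *)
Definition nonzero_vec n (x : 'I_n -> C) := exists i, x i != 0.

Definition w0 (x : 'I_5 -> C) := x (@Ordinal 5 0 isT).
Definition w1 (x : 'I_5 -> C) := x (@Ordinal 5 1 isT).
Definition w2 (x : 'I_5 -> C) := x (@Ordinal 5 2 isT).
Definition w3 (x : 'I_5 -> C) := x (@Ordinal 5 3 isT).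
Definition xx1 (x : 'I_5 -> C) := x (@Ordinal 5 4 isT).

Definition u0 (u : 'I_3 -> C) := u (@Ordinal 3 0 isT).
Definition u1 (u : 'I_3 -> C) := u (@Ordinal 3 1 isT).
Definition u2 (u : 'I_3 -> C) := u (@Ordinal 3 2 isT).

Definition inY (x : 'I_5 -> C) : Prop :=
  nonzero_vec x /\
  w0 x * w3 x - w1 x * w2 x = 0 /\ xx1 x ^+ 2 + w0 x * w3 x = 0.

Definition a1 (v11 v12 v21 v22 d : C) := v11 - v21 - d.
Definition a2 (v11 v12 v21 v22 d : C) := - v11 - v21 + d.
Definition a3 (v11 v12 v21 v22 d : C) := v11 + v21 + d.
Definition a4 (v11 v12 v21 v22 d : C) := - v11 + v21 - d.

Definition HCF (v11 v12 v21 v22 d : C) (x : 'I_5 -> C) : Prop :=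
  inY x /\
  2 * (v22 * (w3 x - w0 x) - v12 * (w2 x - w1 x)) * xx1 x
  + a1 v11 v12 v21 v22 d * w0 x * w1 x + a2 v11 v12 v21 v22 d * w0 x * w2 x
  + a3 v11 v12 v21 v22 d * w1 x * w3 x + a4 v11 v12 v21 v22 d * w2 x * w3 x = 0.

Definition Ppoly (v11 v12 v21 v22 d : C) (u : 'I_3 -> C) : C :=
  a4 v11 v12 v21 v22 d * u2 u ^+ 4
  + 2 * (v22 * u0 u - v12 * u1 u) * u2 u ^+ 3
  - (a3 v11 v12 v21 v22 d * u0 u ^+ 2 + a2 v11 v12 v21 v22 d * u1 u ^+ 2) * u2 u ^+ 2
  + 2 * u0 u * u1 u * (v22 * u1 u - v12 * u0 u) * u2 u
  + a1 v11 v12 v21 v22 d * u0 u ^+ 2 * u1 u ^+ 2.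

Definition Vcurve (v11 v12 v21 v22 d : C) (u : 'I_3 -> C) : Prop :=
  nonzero_vec u /\ Ppoly v11 v12 v21 v22 d u = 0.

Definition not_coord_point (u : 'I_3 -> C) : Prop :=
  ~ (u1 u = 0 /\ u2 u = 0) /\ ~ (u0 u = 0 /\ u2 u = 0) /\ ~ (u0 u = 0 /\ u1 u = 0).

Definition Utilde (v11 v12 v21 v22 d : C) (u : 'I_3 -> C) : Prop :=
  Vcurve v11 v12 v21 v22 d u /\ not_coord_point u.

Definition beta (u : 'I_3 -> C) : 'I_5 -> C :=
  fun i => match val i with
           | 0 => - (u0 u * u1 u ^+ 2)
           | 1 => - (u0 u ^+ 2 * u1 u)
           | 2 => u1 u * u2 u ^+ 2
           | 3 => u0 u * u2 u ^+ 2
           | _ => u0 u * u1 u * u2 u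
           end.

Definition beta_image (S : ('I_3 -> C) -> Prop) (x : 'I_5 -> C) : Prop :=
  exists u, S u /\ x = beta u.

(* Zariski closure in CP^4 of a set S of (nonzero) coordinate vectors:
   the common zero locus of all homogeneous polynomials vanishing on S. *)
Definition zariski_closure (S : ('I_5 -> C) -> Prop) (x : 'I_5 -> C) : Prop :=
  nonzero_vec x /\
  forall (p : {mpoly C[5]}) (k : nat), p \is k.-homog ->
    (forall y, S y -> p.@[y] = 0) -> p.@[x] = 0.

End Defs.

(* Main.v *)
Require Import Defs.
From mathcomp Require Import all_boot all_order all_algebra.
From mathcomp Require Import mpoly.
From mathcomp Require Import ring.
Import GRing.Theory Num.Theory.
Local Open Scope ring_scope.

Section H.
Variable C : numClosedFieldType.

Definition o0 := @Ordinal 5 0 isT.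
Definition o1 := @Ordinal 5 1 isT.
Definition o2 := @Ordinal 5 2 isT.
Definition o3 := @Ordinal 5 3 isT.
Definition o4 := @Ordinal 5 4 isT.

Definition XX (i j : 'I_5) : {mpoly C[5]} := 'X_i * 'X_j.

Lemma XX_homog i j : XX i j \is 2.-homog.
Proof.
rewrite /XX -mpolyXD dhomogX /= mdegD !mdeg1 //.
Qed.

Lemma XX_eval (x : 'I_5 -> C) i j : (XX i j).@[x] = x i * x j.
Proof. by rewrite /XX mevalM !mevalXU. Qed.

Definition pY1 : {mpoly C[5]} := XX o0 o3 - XX o1 o2.
Definition pY2 : {mpoly C[5]} := XX o4 o4 + XX o0 o3.
Definition pH (v11 v12 v21 v22 d : C) : {mpoly C[5]} :=
  (2 * v22) *: XX o3 o4 + (- (2 * v22)) *: XX o0 o4 + (- (2 * v12)) *: XX o2 o4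
  + (2 * v12) *: XX o1 o4
  + a1 v11 v12 v21 v22 d *: XX o0 o1 + a2 v11 v12 v21 v22 d *: XX o0 o2
  + a3 v11 v12 v21 v22 d *: XX o1 o3 + a4 v11 v12 v21 v22 d *: XX o2 o3.

Lemma pY1_homog : pY1 \is 2.-homog.
Proof. by rewrite /pY1 rpredB ?XX_homog. Qed.
Lemma pY2_homog : pY2 \is 2.-homog.
Proof. by rewrite /pY2 rpredD ?XX_homog. Qed.
Lemma pH_homog v11 v12 v21 v22 d : pH v11 v12 v21 v22 d \is 2.-homog.
Proof. rewrite /pH; repeat first [apply: rpredD | apply: rpredB | apply: dhomogZ | apply: XX_homog]. Qed.

Lemma pY1_eval x : pY1.@[x] = w0 x * w3 x - w1 x * w2 x.
Proof. by rewrite /pY1 mevalB !XX_eval. Qed.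
Lemma pY2_eval x : pY2.@[x] = xx1 x ^+ 2 + w0 x * w3 x.
Proof. by rewrite /pY2 mevalD !XX_eval expr2. Qed.
Lemma pH_eval v11 v12 v21 v22 d x : (pH v11 v12 v21 v22 d).@[x] =
  2 * (v22 * (w3 x - w0 x) - v12 * (w2 x - w1 x)) * xx1 x
  + a1 v11 v12 v21 v22 d * w0 x * w1 x + a2 v11 v12 v21 v22 d * w0 x * w2 x
  + a3 v11 v12 v21 v22 d * w1 x * w3 x + a4 v11 v12 v21 v22 d * w2 x * w3 x.
Proof.
rewrite /pH !(mevalD, mevalB, mevalZ, XX_eval).
rewrite /w0 /w1 /w2 /w3 /xx1 /o0 /o1 /o2 /o3 /o4. ring.
Qed.

Lemma part2 v11 v12 v21 v22 d (u : 'I_3 -> C) :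
  Utilde v11 v12 v21 v22 d u -> HCF v11 v12 v21 v22 d (beta u).
Proof.
move=> [[[i Hi] HP] [n12 [n02 n01]]].
split; [split|].
- case: (eqVneq (u0 u) 0) => h0.
  + have h1 : u1 u != 0 by apply/eqP => h1; apply: n01.
    have h2 : u2 u != 0 by apply/eqP => h2; apply: n02.
    exists o2; rewrite /beta /=; exact: mulf_neq0 h1 (expf_neq0 _ h2).
  + case: (eqVneq (u1 u) 0) => h1.
    * have h2 : u2 u != 0 by apply/eqP => h2; apply: n12.
      exists o3; rewrite /beta /=; exact: mulf_neq0 h0 (expf_neq0 _ h2).
    * exists o0; rewrite /beta /= oppr_eq0; exact: mulf_neq0 h0 (expf_neq0 _ h1).
- rewrite /w0 /w1 /w2 /w3 /xx1 /beta /=; split; ring.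
- move: HP; rewrite /Ppoly /w0 /w1 /w2 /w3 /xx1 /beta /= => HP.
  set P := (X in X = 0) in HP.
  transitivity (u0 u * u1 u * P); last by rewrite HP mulr0.
  rewrite /P; ring.
Qed.

End H.

Theorem lemma6p3 (C : numClosedFieldType) (v11 v12 v21 v22 d : C) :
  [|| v11 != 0, v12 != 0, v21 != 0, v22 != 0 | d != 0] ->
  (forall x, zariski_closure (beta_image (Utilde v11 v12 v21 v22 d)) x ->
             HCF v11 v12 v21 v22 d x) /\
  (forall u, Utilde v11 v12 v21 v22 d u -> HCF v11 v12 v21 v22 d (beta u)).
Proof.
move=> _; split; last exact: part2.
move=> x [nz Hcl].
have img p : (forall y, HCF v11 v12 v21 v22 d y -> p.@[y] = 0) ->
   forall y, beta_image (Utilde v11 v12 v21 v22 d) y -> p.@[y] = 0.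
  by move=> Hp y [u [Hu ->]]; apply: Hp; apply: part2.
split; [split; [exact: nz| split] |].
- rewrite -pY1_eval; apply: (Hcl _ 2 (pY1_homog C)); apply: img.
  by move=> y [[_ [H _]] _]; rewrite pY1_eval.
- rewrite -pY2_eval; apply: (Hcl _ 2 (pY2_homog C)); apply: img.
  by move=> y [[_ [_ H]] _]; rewrite pY2_eval.
- rewrite -pH_eval; apply: (Hcl _ 2 (pH_homog _ _ _ _ _ _)); apply: img.
  by move=> y [_ H]; rewrite pH_eval.
Qed.
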